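(* Let $\rho$ be a (complex) measure on the unit circle $S^1$, fix parameters $t=(t_i)_{i\ge1}$, $s=(s_i)_{i\ge1}$, and consider the bilinear form $\langle f,g\rangle=\oint_{S^1}\frac{\rho(dz)}{2\pi i z}f(z)g(z^{-1})e^{\sum_{i\ge1}(t_iz^i-s_iz^{-i})}$ on polynomials. Assume $\tau_n=\det(\langle z^k,z^\ell\rangle)_{0\le k,\ell\le n-1}\neq0$ for all $n\ge1$ ($\tau_0=1$), put $h_n=\tau_{n+1}/\tau_n$, and let $p^{(1)}_n,p^{(2)}_n$ ($n\ge0$) be the unique monic polynomials of degree $n$ with $\langle p^{(1)}_n,p^{(2)}_m\rangle=\delta_{nm}h_n$. Let $L_1$ and $M_2$ be the semi-infinite matrices (indices from $0$) defined by $zp^{(1)}_n(z)=\sum_m (L_1)_{n,m}p^{(1)}_m(z)$ and $zp^{(2)}_n(z)=\sum_m(M_2)_{n,m}p^{(2)}_m(z)$. Then for all $n\ge0$: $(L_1)_{n,n+1}=(M_2)_{n,n+1}=1$, $(L_1)_{n,m}=(M_2)_{n,m}=0$ for $m\ge n+2$, and for $0\le m\le n$, $$(L_1)_{n,m}=-\,h_n\,p^{(1)}_{n+1}(0)\,h_m^{-1}\,p^{(2)}_m(0),\qquad (M_2)_{n,m}=-\,h_n\,p^{(2)}_{n+1}(0)\,h_m^{-1}\,p^{(1)}_m(0).$$ Equivalently, $L_1=-\big(h\,p^{(1)}_\Lambda(0)\otimes h^{-1}p^{(2)}(0)\big)_{-0}+\Lambda$ and $M_2=-\big(h\,p^{(2)}_\Lambda(0)\otimes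 h^{-1}p^{(1)}(0)\big)_{-0}+\Lambda$.
   Context: $h=\operatorname{diag}(h_0,h_1,\dots)$; $p^{(i)}(0)=(p^{(i)}_0(0),p^{(i)}_1(0),\dots)$, $p^{(i)}_\Lambda(0)=(p^{(i)}_1(0),p^{(i)}_2(0),\dots)$; $u\otimes v$ is the matrix $(u_nv_m)$; $B_{-0}$ denotes the lower-triangular part of $B$ including the diagonal; $\Lambda$ is the shift matrix $\Lambda_{ij}=\delta_{j-i,1}$. (In the 2-Toda notation of the paper, $M_2=hL_2^{\top}h^{-1}$.) *)

(* Defs.v *)
From HB Require Import structures.
From mathcomp Require Import all_boot all_order all_algebra.
From mathcomp Require Import complex.
From mathcomp Require Import reals.
Set Implicit Arguments. Unset Strict Implicit. Unset Printing Implicit Defensive.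
Import Order.TTheory GRing.Theory Num.Theory.
Local Open Scope ring_scope.

(* The bilinear form on polynomials
     <f, g> = \oint rho(dz)/(2 pi i z) f(z) g(z^-1) exp(sum_i (t_i z^i - s_i z^-i))
   is entirely determined by its moments
     c j = \oint rho(dz)/(2 pi i z) z^j exp(sum_i (t_i z^i - s_i z^-i)),  j : int,
   since <z^k, z^l> = c (k - l). *)
Definition toep_form (C : ringType) (c : int -> C) (f g : {poly C}) : C :=
  \sum_(k < size f) \sum_(l < size g) f`_k * g`_l * c (k%:Z - l%:Z).

Definition tau (C : comRingType) (c : int -> C) (n : nat) : C :=
  \det (\matrix_(k < n, l < n) toep_form c 'X^k 'X^l).

Definition hcoef (C : fieldType) (c : int -> C) (n : nat) : C :=
  tau c n.+1 / tau c n.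

Definition mult_by_z_matrix (C : ringType) (p : nat -> {poly C})
  (A : nat -> nat -> C) : Prop :=
  forall n, exists N : nat,
    (forall m, (N <= m)%N -> A n m = 0) /\
    'X * p n = \sum_(m < N) A n m *: p m.

(* Main.v *)
Require Import Defs.
From HB Require Import structures.
From mathcomp Require Import all_boot all_order all_algebra.
From mathcomp Require Import ring zify.
From mathcomp Require Import complex.
From mathcomp Require Import reals.
Import Order.TTheory GRing.Theory Num.Theory.
Local Open Scope ring_scope.

Lemma sum_ext (C : nmodType) (N K : nat) (G : nat -> C) :
  (N <= K)%N -> (forall m, (N <= m)%N -> G m = 0) ->
  \sum_(m < N) G m = \sum_(m < K) G m.
Proof.
move=> NK HG; rewrite -(subnKC NK); elim: (K - N)%N => [|j IH]; first by rewrite addn0.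
by rewrite addnS big_ord_recr /= HG ?leq_addr // addr0.
Qed.

Lemma sum_ext2 (C : nmodType) (N K : nat) (G : nat -> C) :
  (forall m, (N <= m)%N -> G m = 0) -> (forall m, (K <= m)%N -> G m = 0) ->
  \sum_(m < N) G m = \sum_(m < K) G m.
Proof.
move=> H1 H2; rewrite (@sum_ext _ N (N + K)) ?leq_addr //.
by rewrite [RHS](@sum_ext _ K (N + K)) ?leq_addl.
Qed.

Lemma monic_coef {C : nzRingType} {p : {poly C}} {n} :
  p \is monic -> size p = n.+1 -> p`_n = 1.
Proof. by move=> /monicP + sp; rewrite lead_coefE sp. Qed.

Lemma size_drop_lead (C : nzRingType) {p : {poly C}} (f : {poly C}) {k} :
  p \is monic -> size p = k.+1 -> (size f <= k.+1)%N ->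
  (size (f - f`_k *: p)%R <= k)%N.
Proof.
move=> mp sp sf; apply/leq_sizeP => j; rewrite leq_eqVlt => /orP [/eqP <-|jk].
  by rewrite coefB coefZ (monic_coef mp sp) mulr1 subrr.
have /leq_sizeP H1 := sf; have /leq_sizeP H2 : (size p <= k.+1)%N by rewrite sp.
by rewrite coefB coefZ H1 // H2 // mulr0 subr0.
Qed.

Lemma decomp0 (C : nzRingType) (g : {poly C}) :
  g = (g`_0)%:P + 'X * \poly_(i < (size g).-1) g`_i.+1.
Proof.
apply/polyP => i; rewrite coefD coefC coefXM coef_poly.
case: i => [|i] /=; first by rewrite addr0.
rewrite add0r; case: ifP => // /negbT; rewrite -leqNgt => H.
by rewrite nth_default //; case: (size g) H => //.
Qed.

Lemma F0l {C : nzRingType} {F : {poly C} -> {poly C} -> C} {g} :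
  (forall a f g, F (a *: f) g = a * F f g) -> F 0 g = 0.
Proof. by move=> FZ; rewrite -(scale0r (0 : {poly C})) FZ mul0r. Qed.

Lemma Fsuml (C : nzRingType) (F : {poly C} -> {poly C} -> C) g N (G : nat -> {poly C}) :
  (forall f1 f2 g, F (f1 + f2) g = F f1 g + F f2 g) ->
  (forall a f g, F (a *: f) g = a * F f g) ->
  F (\sum_(m < N) G m) g = \sum_(m < N) F (G m) g.
Proof.
move=> FD FZ; elim: N => [|N IH]; first by rewrite !big_ord0 (F0l FZ).
by rewrite !big_ord_recr /= FD IH.
Qed.


Lemma ortho0 (C : fieldType) (F : {poly C} -> {poly C} -> C) (p q : nat -> {poly C}) (h : nat -> C) :
  (forall f1 f2 g, F (f1 + f2) g = F f1 g + F f2 g) ->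
  (forall a f g, F (a *: f) g = a * F f g) ->
  (forall n, p n \is monic /\ size (p n) = n.+1) ->
  (forall n m, F (p n) (q m) = (n == m)%:R * h n) ->
  forall j (f : {poly C}), (size f <= j)%N -> forall K, (j <= K)%N -> F f (q K) = 0.
Proof.
move=> FD FZ hp orth; elim => [|j IH] f sf K jK.
  by move: sf; rewrite leqn0 size_poly_eq0 => /eqP ->; rewrite (F0l FZ).
have [mp sp] := hp j.
rewrite -(subrK (f`_j *: p j) f) FD (IH _ (@size_drop_lead _ _ f _ mp sp sf)) ?(ltnW jK) //.
by rewrite FZ orth eqn_leq [(K <= j)%N]leqNgt jK andbF mul0r mulr0 add0r.
Qed.

Lemma orthoC (C : fieldType) (F : {poly C} -> {poly C} -> C) (p q : nat -> {poly C}) (h : nat -> C) :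
  (forall f1 f2 g, F (f1 + f2) g = F f1 g + F f2 g) ->
  (forall a f g, F (a *: f) g = a * F f g) ->
  (forall n, p n \is monic /\ size (p n) = n.+1) ->
  (forall n m, F (p n) (q m) = (n == m)%:R * h n) ->
  forall k (f : {poly C}), (size f <= k.+1)%N -> F f (q k) = f`_k * h k.
Proof.
move=> FD FZ hp orth k f sf; have [mp sp] := hp k.
have -> : F f (q k) = F (f - f`_k *: p k) (q k) + F (f`_k *: p k) (q k) by rewrite -FD subrK.
rewrite (@ortho0 _ F p q h FD FZ hp orth _ _ (@size_drop_lead _ _ f _ mp sp sf)) //.
by rewrite FZ orth eqxx mul1r add0r.
Qed.

Lemma core (C : fieldType) (F : {poly C} -> {poly C} -> C) (p q : nat -> {poly C}) (h : nat -> C) (L : nat -> nat -> C) :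
 (forall f1 f2 g, F (f1 + f2) g = F f1 g + F f2 g) ->
 (forall a f g, F (a *: f) g = a * F f g) ->
 (forall f g1 g2, F f (g1 + g2) = F f g1 + F f g2) ->
 (forall a f g, F f (a *: g) = a * F f g) ->
 (forall f g, F ('X * f) ('X * g) = F f g) ->
 (forall n, h n != 0) ->
 (forall n, p n \is monic /\ size (p n) = n.+1) ->
 (forall n, q n \is monic /\ size (q n) = n.+1) ->
 (forall n m, F (p n) (q m) = (n == m)%:R * h n) ->
 mult_by_z_matrix p L ->
 forall n, [/\ L n n.+1 = 1, (forall m, (n.+2 <= m)%N -> L n m = 0) &
   (forall m, (m <= n)%N -> L n m = - (h n * (p n.+1).[0] * (h m)^-1 * (q m).[0]))].
Proof.
move=> FDl FZl FDr FZr FX hnz hp hq orth hL.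
have orth' : forall n m, (fun f g => F g f) (q n) (p m) = (n == m)%:R * h n.
  move=> n m /=; rewrite orth eq_sym; case: eqP => [->|] //; by rewrite !mul0r.
have O1 := @ortho0 _ F p q h FDl FZl hp orth.
have C1 := @orthoC _ F p q h FDl FZl hp orth.
have O2 := @ortho0 _ (fun f g => F g f) q p h (fun f1 f2 g => FDr g f1 f2) (fun a f g => FZr a g f) hq orth'.
have C2 := @orthoC _ (fun f g => F g f) q p h (fun f1 f2 g => FDr g f1 f2) (fun a f g => FZr a g f) hq orth'.
simpl in O2, C2.
have Lh : forall n k, L n k * h k = F ('X * p n) (q k).
  move=> n k; have [N [HN ->]] := hL n; rewrite (@Fsuml _ F (q k) N (fun m => L n m *: p m) FDl FZl).
  under eq_bigr do rewrite FZl orth.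
  rewrite (@sum_ext2 _ N k.+1 (fun m => L n m * ((m == k)%:R * h m))); last first.
  - by move=> m km; rewrite (gtn_eqF km) mul0r mulr0.
  - by move=> m Nm; rewrite HN // mul0r.
  rewrite big_ord_recr /= eqxx mul1r big1 ?add0r // => i _.
  by rewrite (ltn_eqF (ltn_ord i)) mul0r mulr0.
have sXp : forall n, (size ('X * p n)%R <= n.+2)%N.
  move=> n; apply: leq_trans (size_polyMleq _ _) _.
  by rewrite size_polyX (hp n).2.
pose A n := F ('X * p n) 1.
have decF : forall f k, F f (q k) = (q k).[0] * F f 1 + F f ('X * \poly_(i < k) (q k)`_i.+1).
  move=> f k; rewrite {1}(@decomp0 _ (q k)) FDr -[_%:P]mulr1 mul_polyC FZr horner_coef0.
  by rewrite (hq k).2.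
have Lle : forall n k, (k <= n)%N -> L n k * h k = (q k).[0] * A n.
  move=> n k kn; rewrite Lh decF FX (O2 k) ?addr0 //.
have hrec : forall n, h n.+1 = h n + (q n.+1).[0] * A n.
  move=> n; have := C1 n.+1 _ (sXp n); rewrite coefXM /= (monic_coef (hp n).1 (hp n).2) mul1r => <-.
  rewrite decF FX (C2 n) ?size_poly // coef_poly ltnSn (monic_coef (hq _).1 (hq _).2).
  by rewrite mul1r addrC.
have Ln1 : forall n, L n n.+1 = 1.
  move=> n; apply: (mulIf (hnz n.+1)); rewrite Lh mul1r (C1 n.+1 _ (sXp n)).
  by rewrite coefXM /= (monic_coef (hp n).1 (hp n).2) mul1r.
have L0 : forall n m, (n.+2 <= m)%N -> L n m = 0.
  move=> n m nm; apply: (mulIf (hnz m)); rewrite Lh mul0r (O1 n.+2) //.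
pose S n := \sum_(k < n.+1) (p k).[0] * (q k).[0] / h k.
have evalsum : forall n, A n * S n + (p n.+1).[0] = 0.
  move=> n; have [N [HN E]] := hL n.
  have := congr1 (horner^~ 0) E; rewrite mulrC hornerMX mulr0 horner_sum.
  under eq_bigr do rewrite hornerZ.
  rewrite (@sum_ext2 _ N n.+2 (fun m => L n m * (p m).[0])); last first.
  - by move=> m nm; rewrite L0 // mul0r.
  - by move=> m Nm; rewrite HN // mul0r.
  rewrite big_ord_recr /= Ln1 mul1r => E0; rewrite [RHS]E0; congr (_ + _).
  rewrite /S mulr_sumr; apply: eq_bigr => i _.
  have := Lle n i (ltn_ord i); move/(congr1 (fun x => x / h i)).
  rewrite mulfK // => ->; rewrite /A; field; exact: hnz.
have Sh : forall n0, S n0 = (h n0)^-1.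
  elim => [|k IH].
    rewrite /S big_ord_recr big_ord0 /= add0r !horner_coef0.
    by rewrite (monic_coef (hp 0).1 (hp 0).2) (monic_coef (hq 0).1 (hq 0).2) !mul1r.
  have eA : A k = - ((p k.+1).[0] * h k).
    have := evalsum k; rewrite IH => /eqP; rewrite addr_eq0 => /eqP e.
    by rewrite -mulNr -e mulfVK.
  rewrite /S big_ord_recr /= -/(S k) IH.
  have hn1 := hnz k.+1; have hn := hnz k.
  rewrite hrec eA in hn1 *; field; by rewrite hn1 hn.
move=> n; split => //; first exact: L0.
move=> m mn; have := Lle n m mn; move/(congr1 (fun x => x / h m)).
rewrite mulfK // => ->.
have := evalsum n; rewrite Sh => /eqP; rewrite addr_eq0 => /eqP eA.
have -> : A n = - (p n.+1).[0] * h n by rewrite -eA mulfVK.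
field; exact: hnz.
Qed.

Lemma tfN (C : comRingType) (c : int -> C) (f g : {poly C}) N M :
  (size f <= N)%N -> (size g <= M)%N ->
  toep_form c f g = \sum_(k < N) \sum_(l < M) f`_k * g`_l * c (k%:Z - l%:Z).
Proof.
move=> sf sg; rewrite /toep_form.
rewrite (@sum_ext _ (size f) N (fun k => \sum_(l < size g) f`_k * g`_l * c (k%:Z - l%:Z))) //; last first.
  by move=> m fm; rewrite big1 // => i _; rewrite nth_default // !mul0r.
apply: eq_bigr => k _.
rewrite (@sum_ext _ (size g) M (fun l => f`_k * g`_l * c (k%:Z - l%:Z))) //.
by move=> m gm; rewrite (nth_default _ gm) mulr0 mul0r.
Qed.

Lemma tfDl (C : comRingType) (c : int -> C) f1 f2 g :
  toep_form c (f1 + f2) g = toep_form c f1 g + toep_form c f2 g.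
Proof.
pose N := maxn (size f1) (size f2).
rewrite !(@tfN _ c _ _ N (size g)) ?leq_maxl ?leq_maxr ?size_polyD //.
rewrite -big_split; apply: eq_bigr => k _; rewrite -big_split; apply: eq_bigr => l _.
by rewrite coefD !mulrDl.
Qed.

Lemma tfDr (C : comRingType) (c : int -> C) f g1 g2 :
  toep_form c f (g1 + g2) = toep_form c f g1 + toep_form c f g2.
Proof.
pose M := maxn (size g1) (size g2).
rewrite !(@tfN _ c _ _ (size f) M) ?leq_maxl ?leq_maxr ?size_polyD //.
rewrite -big_split; apply: eq_bigr => k _; rewrite -big_split; apply: eq_bigr => l _.
by rewrite coefD mulrDr mulrDl.
Qed.

Lemma tfZl (C : comRingType) (c : int -> C) a f g :
  toep_form c (a *: f) g = a * toep_form c f g.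
Proof.
rewrite !(@tfN _ c _ _ (size f) (size g)) ?size_scale_leq //.
rewrite mulr_sumr; apply: eq_bigr => k _; rewrite mulr_sumr; apply: eq_bigr => l _.
by rewrite coefZ !mulrA.
Qed.

Lemma tfZr (C : comRingType) (c : int -> C) a f g :
  toep_form c f (a *: g) = a * toep_form c f g.
Proof.
rewrite !(@tfN _ c _ _ (size f) (size g)) ?size_scale_leq //.
rewrite mulr_sumr; apply: eq_bigr => k _; rewrite mulr_sumr; apply: eq_bigr => l _.
by rewrite coefZ; ring.
Qed.

Lemma sizeX_le (C : comRingType) (f : {poly C}) : (size ('X * f)%R <= (size f).+1)%N.
Proof.
apply: leq_trans (size_polyMleq _ _) _; by rewrite size_polyX.
Qed.

Lemma tfX (C : comRingType) (c : int -> C) f g :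
  toep_form c ('X * f) ('X * g) = toep_form c f g.
Proof.
rewrite (@tfN _ c _ _ (size f).+1 (size g).+1) ?sizeX_le //.
rewrite (@tfN _ c _ _ (size f) (size g)) //.
rewrite big_ord_recl /= big1 ?add0r; last by move=> i _; rewrite coefXM /= !mul0r.
apply: eq_bigr => k _; rewrite big_ord_recl /= !coefXM /= mulr0 mul0r add0r.
apply: eq_bigr => l _; rewrite /bump /= !add1n add0n coefXM /=.
congr (_ * _ * c _); lia.
Qed.

Lemma tau0 (C : comRingType) (c : int -> C) : tau c 0 = 1.
Proof. by rewrite /tau det_mx00. Qed.
Theorem theorem2p7 (R : realType) (c : int -> R[i])
  (p1 p2 : nat -> {poly R[i]}) (L1 M2 : nat -> nat -> R[i]) :
  (forall n, (0 < n)%N -> tau c n != 0) ->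
  (forall n, p1 n \is monic /\ size (p1 n) = n.+1) ->
  (forall n, p2 n \is monic /\ size (p2 n) = n.+1) ->
  (forall n m, toep_form c (p1 n) (p2 m) = (n == m)%:R * hcoef c n) ->
  mult_by_z_matrix p1 L1 ->
  mult_by_z_matrix p2 M2 ->
  forall n : nat,
    [/\ L1 n n.+1 = 1, M2 n n.+1 = 1,
        (forall m, (n.+2 <= m)%N -> L1 n m = 0 /\ M2 n m = 0) &
        (forall m, (m <= n)%N ->
           L1 n m = - (hcoef c n * (p1 n.+1).[0] * (hcoef c m)^-1 * (p2 m).[0])
        /\ M2 n m = - (hcoef c n * (p2 n.+1).[0] * (hcoef c m)^-1 * (p1 m).[0]))].
Proof.
move=> htau hp hq orth hL hM n.
have hnz : forall n, hcoef c n != 0.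
  move=> k; have t1 : tau c k.+1 != 0 by apply: htau.
  have t0 : tau c k != 0 by case: k t1 => [|k] _; [rewrite tau0 oner_neq0 | apply: htau].
  by rewrite /hcoef mulf_neq0 ?invr_neq0.
have orth' : forall n m, (fun f g => toep_form c g f) (p2 n) (p1 m) = (n == m)%:R * hcoef c n.
  move=> k m /=; rewrite orth eq_sym; case: eqP => [->|] //; by rewrite !mul0r.
have [a1 a2 a3] := @core _ (toep_form c) p1 p2 (hcoef c) L1 (@tfDl _ c) (@tfZl _ c)
  (@tfDr _ c) (@tfZr _ c) (@tfX _ c) hnz hp hq orth hL n.
have [b1 b2 b3] := @core _ (fun f g => toep_form c g f) p2 p1 (hcoef c) M2
  (fun f1 f2 g => @tfDr _ c g f1 f2) (fun a f g => @tfZr _ c a g f)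
  (fun f g1 g2 => @tfDl _ c g1 g2 f) (fun a f g => @tfZl _ c a g f)
  (fun f g => @tfX _ c g f) hnz hq hp orth' hM n.
split => // m Hm; first by rewrite a2 ?b2.
by rewrite a3 ?b3.
Qed.
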